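(* Let $S$ be a set of $n\ge3$ points in the plane with the $L_1$-metric as underlying metric. The minimum, over all axis-aligned highway crosses of infinite speed, of the travel-time diameter of $S$ equals the width of a smallest enclosing cross of $S$.
   Context: An axis-aligned highway cross is the union $H$ of a horizontal line and a vertical line. One travels with speed $1$ off $H$ (distances in the $L_1$-metric $d$) and with infinite speed along $H$; hence the travel time is $t_H(p,q)=\min\{d(p,q),\, d(p,H)+d(q,H)\}$, where $d(x,H)$ is the $L_1$-distance from $x$ to $H$. The travel-time diameter of $S$ is $\max_{p,q\in S}t_H(p,q)$. An enclosing cross of $S$ is the union of a horizontal strip and a vertical strip of equal width $\omega$ (a strip being the closed region between two parallel lines, its width the distance between them) whose union contains $S$; $\omega$ is its width. A smallest enclosing cross is one of minimum width. *)

(* Defs.v *)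
From HB Require Import structures.
From mathcomp Require Import all_boot all_order all_algebra.
From mathcomp Require Import reals.
Set Implicit Arguments. Unset Strict Implicit. Unset Printing Implicit Defensive.
Import Order.TTheory GRing.Theory Num.Theory.
Local Open Scope ring_scope.

Section Defs.
Variable R : realType.
Definition pt := (R * R)%type.

Definition d1 (p q : pt) : R := `|p.1 - q.1| + `|p.2 - q.2|.

(* The highway cross H = {x = v} ∪ {y = h}; L1-distance from p to H. *)
Definition distH (v h : R) (p : pt) : R := Num.min `|p.1 - v| `|p.2 - h|.

Definition tH (v h : R) (p q : pt) : R :=
  Num.min (d1 p q) (distH v h p + distH v h q).

(* travel-time diameter of S w.r.t. the cross (v,h): max over pairs
   (all values are >= 0, so 0 as neutral element is harmless for nonempty S) *)
Definition diamH (v h : R) (S : seq pt) : R :=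
  \big[Num.max/0]_(p <- S) \big[Num.max/0]_(q <- S) tH v h p q.

Definition enclosing_cross (S : seq pt) (w : R) : Prop :=
  0 <= w /\ exists a c : R, forall p, p \in S ->
    (a <= p.1 <= a + w) \/ (c <= p.2 <= c + w).
End Defs.

(* Main.v *)
Require Import Defs.
From HB Require Import structures.
From mathcomp Require Import all_boot all_order all_algebra.
From mathcomp Require Import reals.
From mathcomp Require Import lra.
From Stdlib Require Import Classical.
Import Order.TTheory GRing.Theory Num.Theory.
Local Open Scope ring_scope.

Section Aux.
Variable R : realType.

Ltac ab t := have := ler_norm t; have := ler_norm (- t); rewrite normrN;
  have := normr_ge0 t.

Lemma bmax_ge (T : eqType) (s : seq T) (F : T -> R) x :
  x \in s -> F x <= \big[Num.max/0]_(y <- s) F y.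
Proof.
elim: s => //= y s IH; rewrite in_cons big_cons le_max => /orP[/eqP->|/IH->].
  by rewrite lexx.
by rewrite orbT.
Qed.

Lemma bmax_le (T : eqType) (s : seq T) (F : T -> R) w :
  0 <= w -> (forall x, x \in s -> F x <= w) -> \big[Num.max/0]_(y <- s) F y <= w.
Proof.
move=> w0; elim: s => [|y s IH] H; first by rewrite big_nil.
rewrite big_cons ge_max H ?mem_head // IH // => x xs; apply H.
by rewrite in_cons xs orbT.
Qed.

Lemma bmax_ge0 (T : eqType) (s : seq T) (F : T -> R) :
  0 <= \big[Num.max/0]_(y <- s) F y.
Proof.
elim: s => [|y s IH]; first by rewrite big_nil.
by rewrite big_cons le_max IH orbT.
Qed.

Lemma extreme (T : eqType) (f : T -> R) z s : exists x0 x1,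
  [/\ x0 \in z :: s, x1 \in z :: s &
    forall y, y \in z :: s -> f x0 <= f y <= f x1].
Proof.
elim: s z => [|y s IH] z.
  exists z, z; split; rewrite ?mem_head // => y; rewrite inE => /eqP->.
  by rewrite lexx.
have [x0 [x1 [h0 h1 H]]] := IH y.
exists (if f z <= f x0 then z else x0), (if f x1 <= f z then z else x1).
have sub : forall u, u \in y :: s -> u \in z :: y :: s.
  by move=> u us; rewrite in_cons us orbT.
split.
- by case: ifP => _; rewrite ?mem_head ?sub.
- by case: ifP => _; rewrite ?mem_head ?sub.
move=> u; rewrite in_cons => /orP[/eqP->|us].
  have := H y (mem_head _ _); move=> /andP[C D].
  by have [A|A] := leP (f z) (f x0); have [B|B] := leP (f x1) (f z);
    apply/andP; split; lra.
have /andP[C D] := H u us.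
by have [A|A] := leP (f z) (f x0); have [B|B] := leP (f x1) (f z);
  apply/andP; split; lra.
Qed.

Lemma addle (a b D : R) : 0 <= a -> 0 <= b -> a + b <= D -> a <= D /\ b <= D.
Proof. move=> *; split; lra. Qed.

Lemma strip (x px c r D : R) :
  r <= `|px - c| -> `|x - c| <= r -> (`|px - x| <= D \/ r + `|x - c| <= D) ->
  (if c <= px then c + r - D else c - r) <= x <=
  (if c <= px then c + r - D else c - r) + D.
Proof.
move=> r1 hq Ht; have := hq; rewrite ler_norml => /andP[q1 q2].
case: ifP => Hv.
  rewrite ger0_norm ?subr_ge0 // in r1.
  case: Ht => Ht; ab (px - x); ab (x - c) => *; apply/andP; split; lra.
move/negbT: Hv; rewrite -ltNge => Hv.
rewrite ltr0_norm ?subr_lt0 // in r1.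
case: Ht => Ht; ab (px - x); ab (x - c) => *; apply/andP; split; lra.
Qed.

Definition pt' := (R * R)%type.

Lemma diam_encl (S : seq pt') v h : S != [::] ->
  enclosing_cross S (diamH v h S).
Proof.
case: S => [//|z s] _.
set S := z :: s; set D := diamH v h S.
have [x0 [p [_ pS Hp]]] := @extreme _ (distH v h) z s.
set r := distH v h p.
have Hmax : forall q, q \in S -> distH v h q <= r.
  by move=> q /Hp /andP[].
have HD : forall q, q \in S -> tH v h p q <= D.
  move=> q qS.
  apply: le_trans (@bmax_ge _ S (fun p => \big[Num.max/0]_(q <- S) tH v h p q) p pS).
  exact: (@bmax_ge _ S (fun q => tH v h p q) q qS).
split; first exact: bmax_ge0.
exists (if v <= p.1 then v + r - D else v - r),
       (if h <= p.2 then h + r - D else h - r).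
move=> q qS.
have hq := Hmax q qS.
have := HD q qS; rewrite /tH ge_min => /orP Ht.
have r1 : r <= `|p.1 - v| by rewrite /r /distH minEle; case: ifP => // /negbT; rewrite -ltNge => /ltW.
have r2 : r <= `|p.2 - h| by rewrite /r /distH minEle; case: ifP.
have [d1x d1y] := @addle _ _ _ (normr_ge0 (p.1 - q.1)) (normr_ge0 (p.2 - q.2)) (le_refl (d1 p q)).
have Eq : distH v h q = (if `|q.1 - v| <= `|q.2 - h| then `|q.1 - v| else `|q.2 - h|) by rewrite /distH minEle.
move: hq Ht; rewrite Eq; case: ifP => Hc hq Ht.
- left; apply: strip r1 hq _.
  case: Ht => Ht; [left; exact: le_trans d1x Ht | by right].
- right; apply: strip r2 hq _.
  case: Ht => Ht; [left; exact: le_trans d1y Ht | by right].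
Qed.


Lemma encl_diam (S : seq pt') w a c : 0 <= w ->
  (forall p, p \in S -> (a <= p.1 <= a + w) \/ (c <= p.2 <= c + w)) ->
  diamH (a + w / 2) (c + w / 2) S <= w.
Proof.
move=> w0 H.
have dH : forall p, p \in S -> distH (a + w / 2) (c + w / 2) p <= w / 2.
  move=> p /H [] /andP [h1 h2]; rewrite /distH ge_min; apply/orP; [left|right];
  rewrite ler_norml; apply/andP; split; lra.
apply: bmax_le => // p pS; apply: bmax_le => // q qS.
rewrite /tH ge_min; apply/orP; right.
have := dH p pS; have := dH q qS; lra.
Qed.

Lemma minP (L : seq R) (P : R -> Prop) : (exists x, x \in L /\ P x) ->
  exists m, [/\ m \in L, P m & forall y, y \in L -> P y -> m <= y].
Proof.
elim: L => [[x [//]]|x L IH] Hx.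
have [[y [yL Py]]|N] := classic (exists y, y \in L /\ P y).
  have [m [mL Pm Hm]] := IH (ex_intro _ y (conj yL Py)).
  have [Px|nPx] := classic (P x).
    have [A|A] := leP x m.
      exists x; split; rewrite ?mem_head // => u; rewrite in_cons => /orP[/eqP->|uL] Pu.
        by rewrite lexx.
      exact: le_trans A (Hm u uL Pu).
    exists m; split; rewrite ?in_cons ?mL ?orbT // => u; rewrite in_cons => /orP[/eqP->|uL] Pu.
      exact: ltW.
    exact: Hm.
  exists m; split; rewrite ?in_cons ?mL ?orbT // => u; rewrite in_cons => /orP[/eqP->|uL] Pu.
    by [].
  exact: Hm.
have Px : P x.
  case: Hx => u [] ; rewrite in_cons => /orP[/eqP->//|uL] Pu.
  by case: N; exists u.
exists x; split; rewrite ?mem_head // => u; rewrite in_cons => /orP[/eqP->|uL] Pu.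
  by rewrite lexx.
by case: N; exists u.
Qed.

Lemma span (f : pt' -> R) (X S : seq pt') d lo w : d \in S -> 0 <= w ->
  {subset X <= S} -> (forall p, p \in X -> lo <= f p <= lo + w) ->
  exists x0 x1, [/\ x0 \in S, x1 \in S, f x0 <= f x1, f x1 - f x0 <= w &
    forall p, p \in X -> f x0 <= f p <= f x1].
Proof.
move=> dS w0 sub H; case: X sub H => [|z X] sub H.
  by exists d, d; split; rewrite ?lexx ?subrr.
have [x0 [x1 [h0 h1 E]]] := @extreme _ f z X.
exists x0, x1; split; rewrite ?sub //.
- by have /andP[] := E _ h0.
- have /andP[? ?] := H _ h0; have /andP[? ?] := H _ h1; lra.
Qed.

Definition cand (S : seq pt') (w : R) := exists p q, [/\ p \in S, q \in S &
  (w = `|p.1 - q.1| \/ w = `|p.2 - q.2|)].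

Lemma shrink (S : seq pt') d w : d \in S -> enclosing_cross S w ->
  exists w', [/\ cand S w', w' <= w & enclosing_cross S w'].
Proof.
move=> dS [w0 [a [c H]]].
set X := [seq p <- S | a <= p.1 <= a + w].
set Y := [seq p <- S | ~~ (a <= p.1 <= a + w)].
have sX : {subset X <= S} by move=> p; rewrite mem_filter => /andP[].
have bX : forall p, p \in X -> a <= p.1 <= a + w by move=> p; rewrite mem_filter => /andP[].
have sY : {subset Y <= S} by move=> p; rewrite mem_filter => /andP[].
have bY : forall p, p \in Y -> c <= p.2 <= c + w.
  by move=> p; rewrite mem_filter => /andP[/negbTE A pS]; case: (H p pS); rewrite ?A.
have [x0 [x1 [x0S x1S ex1 ex2 EX]]] := @span (fun p => p.1) X S d a w dS w0 sX bX.
have [y0 [y1 [y0S y1S ey1 ey2 EY]]] := @span (fun p => p.2) Y S d c w dS w0 sY bY.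
move: ex1 ex2 ey1 ey2 EX EY => /= ex1 ex2 ey1 ey2 EX EY.
exists (if x1.1 - x0.1 <= y1.2 - y0.2 then y1.2 - y0.2 else x1.1 - x0.1).
have gx : 0 <= x1.1 - x0.1 by rewrite subr_ge0.
have gy : 0 <= y1.2 - y0.2 by rewrite subr_ge0.
split.
- case: ifP => _.
    by exists y1, y0; split => //; right; rewrite ger0_norm.
  by exists x1, x0; split => //; left; rewrite ger0_norm.
- by case: ifP.
split; first by case: ifP.
exists x0.1, y0.2 => q qS.
case: (boolP (a <= q.1 <= a + w)) => A.
  have qX : q \in X by rewrite mem_filter A qS.
  left; have /andP[B C] := EX q qX.
  apply/andP; split => //; case: ifP => D; lra.
have qY : q \in Y by rewrite mem_filter A qS.
right; have /andP[B C] := EY q qY.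
apply/andP; split => //; case: ifP => D; lra.
Qed.

End Aux.
Arguments cand {R}.
Arguments shrink {R S d w}.
Arguments diam_encl {R S}.
Arguments encl_diam {R S w a c}.

Theorem lemma2 (R : realType) (S : seq (R * R)) :
  uniq S -> (3 <= size S)%N ->
  exists m : R,
    (exists v h : R, diamH v h S = m /\ forall v' h' : R, m <= diamH v' h' S) /\
    (enclosing_cross S m /\ forall w : R, enclosing_cross S w -> m <= w).
Proof.
move=> _; case: S => [//|d s] _.
set S := d :: s.
have dS : d \in S by rewrite mem_head.
have S0 : S != [::] by [].
set L := [seq `|p.1 - q.1| | p <- S, q <- S] ++ [seq `|p.2 - q.2| | p <- S, q <- S].
have candL : forall w, cand S w -> w \in L.
  move=> w [p [q [pS qS E]]]; rewrite mem_cat; apply/orP; case: E => ->; [left|right].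
    exact: (allpairs_f (fun p q : R * R => `|p.1 - q.1|) pS qS).
  exact: (allpairs_f (fun p q : R * R => `|p.2 - q.2|) pS qS).
have hex : exists x, x \in L /\ enclosing_cross S x.
  have [w' [cw' _ Pw']] := shrink dS (diam_encl 0 0 S0).
  by exists w'; split => //; apply: candL.
have [m [mL Pm Hm]] := @minP R L (enclosing_cross S) hex.
have minm : forall w, enclosing_cross S w -> m <= w.
  move=> w Pw; have [w' [cw' le Pw']] := shrink dS Pw.
  exact: le_trans (Hm _ (candL _ cw') Pw') le.
exists m; split; last by split.
have [m0 [a [c Hac]]] := Pm.
exists (a + m / 2), (c + m / 2); split; last by move=> v' h'; apply: minm; apply: diam_encl.
apply: le_anti; apply/andP; split; first exact: encl_diam.
by apply: minm; apply: diam_encl.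
Qed.
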